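(* Let $n, K$ be positive integers and let $\{t_1,\dots,t_n\}$ be partitioned into $K$ nonempty true clusters $C_1,\dots,C_K$ with sizes $n_j=|C_j|$; set $n_{\min}=\min_j n_j$. Let $g^{\mathrm{True}}\in\{0,1\}^{n\times K}$ with $g^{\mathrm{True}}_{ij}=1$ iff $t_i\in C_j$, and let $g\in\{0,1\}^{n\times K}$ be any estimated assignment matrix in which each row has exactly one entry equal to $1$. Define $\bar p(C_j)=n_j/n$, $\hat p(C_j)=\frac1n\sum_{i=1}^n g_{ij}$, $$\bar{\mathcal E}=-\sum_{j=1}^K \bar p(C_j)\log \bar p(C_j),\qquad \hat{\mathcal E}=-\sum_{j=1}^K \hat p(C_j)\log \hat p(C_j)$$ (with $0\log 0=0$), and $M_{\mathrm{error}}=\sum_{j=1}^K\sum_{i=1}^n \mathbb I(g_{ij}\neq g^{\mathrm{True}}_{ij})$. Suppose there exists $0<c_2<1$ such that $2Kn_{\min}/n\ge c_2$. Then $$|\hat{\mathcal E}-\bar{\mathcal E}|\le h\!\left(\frac{2K}{c_2}\right)\left|\frac{1}{n}M_{\mathrm{error}}\right|,\qquad\text{where } h(x)=x+\log x.$$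
   Context: $\bar{\mathcal E}$ is the empirical (true-cluster) entropy and $\hat{\mathcal E}$ the entropy computed from the estimated clustering; estimated cluster $j$ is compared with true cluster $j$ (labels are aligned). $\log$ is the natural logarithm. *)

(* Defs.v *)
From mathcomp Require Import all_boot all_order all_algebra.
From mathcomp Require Import all_classical all_reals exp.
Set Implicit Arguments. Unset Strict Implicit. Unset Printing Implicit Defensive.
Import Order.TTheory GRing.Theory Num.Theory.
Local Open Scope ring_scope.

Definition xlogx (R : realType) (x : R) : R := if x == 0 then 0 else x * ln x.

Definition entropy (R : realType) (K : nat) (p : 'I_K -> R) : R :=
  - \sum_(j < K) xlogx (p j).

Definition gTrue (n K : nat) (lab : 'I_n -> 'I_K) (i : 'I_n) (j : 'I_K) : bool :=
  lab i == j.

Definition cluster (n K : nat) (lab : 'I_n -> 'I_K) (j : 'I_K) : {set 'I_n} :=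
  [set i | lab i == j].

Definition pbar (R : realType) (n K : nat) (lab : 'I_n -> 'I_K) (j : 'I_K) : R :=
  (#|cluster lab j|%:R) / n%:R.

Definition phat (R : realType) (n K : nat) (g : 'I_n -> 'I_K -> bool) (j : 'I_K) : R :=
  (\sum_(i < n) (g i j)%:R) / n%:R.

Definition M_error (n K : nat) (lab : 'I_n -> 'I_K) (g : 'I_n -> 'I_K -> bool) : nat :=
  \sum_(j < K) \sum_(i < n) (g i j != gTrue lab i j).

Definition n_min (n K : nat) (lab : 'I_n -> 'I_K) : nat :=
  \big[minn/n]_(j < K) #|cluster lab j|.

Definition hfun (R : realType) (x : R) : R := x + ln x.

(* Main.v *)
Require Import Defs.
From mathcomp Require Import all_boot all_order all_algebra.
From mathcomp Require Import all_classical all_reals exp.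
From mathcomp Require Import ring lra.
Import Order.TTheory GRing.Theory Num.Theory.
Local Open Scope ring_scope.

Lemma ln_le_sub1 (R : realType) (y : R) : 0 < y -> ln y <= y - 1.
Proof.
move=> y0; have := @le_ln1Dx R (y - 1); rewrite addrCA subrr addr0; apply; lra.
Qed.

Lemma xlogxE (R : realType) (x : R) : xlogx x = x * ln x.
Proof. by rewrite /xlogx; case: eqP => [->|//]; rewrite mul0r. Qed.

Lemma term_bound (R : realType) (p q x : R) :
  0 < p -> p <= 1 -> 0 <= q -> q <= 1 -> 1 <= x -> 1 <= x * p ->
  `|q * ln q - p * ln p| <= (x + ln x) * `|q - p|.
Proof.
move=> p0 p1 q0 q1 x1 xp.
have x0 : 0 < x by lra.
have lnp : - ln p <= ln x.
  have : ln (x^-1) <= ln p.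
    rewrite ler_ln ?posrE ?invr_gt0 //.
    by rewrite -(ler_pM2l x0) mulfV ?gt_eqF.
  by rewrite lnV ?posrE //; lra.
have lnp0 : ln p <= 0 by apply: ln_le0.
have lnx0 : 0 <= ln x by apply: ln_ge0.
have E : q * ln q - p * ln p = q * (ln q - ln p) + (q - p) * ln p by ring.
rewrite E.
have B2 : `|(q - p) * ln p| <= ln x * `|q - p|.
  rewrite normrM mulrC ler_wpM2r //.
  by rewrite ler0_norm //.
have B1 : `|q * (ln q - ln p)| <= x * `|q - p|.
  case: (ltrP 0 q) => [qpos|q0'].
  - have h1 : ln q - ln p <= q / p - 1.
      by rewrite -ln_div ?posrE //; apply: ln_le_sub1; rewrite divr_gt0.
    have h2 : ln p - ln q <= p / q - 1.
      by rewrite -ln_div ?posrE //; apply: ln_le_sub1; rewrite divr_gt0.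
    set L := ln q - ln p in h1 h2 *.
    have qge : 0 <= q by lra.
    have a1 : q * L <= q * (q / p - 1) by rewrite ler_wpM2l.

    have a2 : q * (-L) <= q * (p / q - 1).
      by rewrite ler_wpM2l // /L opprB.
    have e1 : q * (q / p - 1) = q * q / p - q by field; apply/negP; move/eqP=> E0; move: p0 qpos; rewrite ?E0; lra.
    have e2 : q * (p / q - 1) = p - q by field; apply/negP; move/eqP=> E0; move: p0 qpos; rewrite ?E0; lra.
    rewrite e1 in a1; rewrite e2 in a2.
    have a3 : q * q / p - q = (q - p) * (q / p) by field; apply/negP; move/eqP=> E0; move: p0 qpos; rewrite ?E0; lra.
    rewrite a3 in a1.
    have qp : q / p <= x.
      rewrite ler_pdivrMr //; nra.
    have qp0 : 0 <= q / p by rewrite divr_ge0 // ltW.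
    case: (lerP p q) => pq.
    + have n1 : 0 <= q * L by nra.
      have n2 : 0 <= q - p by lra.
      rewrite (ger0_norm n1).
      nra.
    + have n1 : q * L <= 0 by nra.
      have n2 : q - p <= 0 by lra.
      rewrite (ler0_norm n1).
      have : q / p <= 1 by rewrite ler_pdivrMr //; lra.
      nra.
  - have -> : q = 0 by apply/eqP; rewrite eq_le q0' q0.
    rewrite mul0r normr0 mulr_ge0 //; lra.
apply: (le_trans (ler_normD _ _)); rewrite [(x + _) * _]mulrDl.
exact: lerD B1 B2.
Qed.

Lemma card_cluster (n K : nat) (lab : 'I_n -> 'I_K) (j : 'I_K) :
  #|cluster lab j| = (\sum_(i < n) (lab i == j))%N.
Proof.
by rewrite -sum1_card big_mkcond /=; apply: eq_bigr => i _; rewrite inE; case: (lab i == j).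
Qed.

Lemma bigmin_le_seq (I : eqType) (r : seq I) (F : I -> nat) (m : nat) (j : I) :
  j \in r -> (\big[minn/m]_(i <- r) F i <= F j)%N.
Proof.
elim: r => [//|a r IH]; rewrite in_cons big_cons => /orP [/eqP ->|jr].
  exact: geq_minl.
by apply: leq_trans (geq_minr _ _) (IH jr).
Qed.

Theorem lemma1 (R : realType) (n K : nat) (lab : 'I_n -> 'I_K)
    (g : 'I_n -> 'I_K -> bool) :
  (0 < n)%N -> (0 < K)%N ->
  (forall j : 'I_K, (0 < #|cluster lab j|)%N) ->
  (forall i : 'I_n, #|[set j | g i j]| = 1%N) ->
  forall c2 : R, 0 < c2 -> c2 < 1 ->
    c2 <= (2 * K%:R * (n_min lab)%:R) / n%:R ->
  `|entropy (phat R g) - entropy (pbar R lab)|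
    <= hfun (2 * K%:R / c2) * `|(M_error lab g)%:R / n%:R|.
Proof.
move=> n0 K0 hpos _ c2 c20 c21 hc.
set x := 2 * K%:R / c2.
have nR : 0 < n%:R :> R by rewrite ltr0n.
have KR : 1 <= K%:R :> R by rewrite ler1n.
have x1 : 1 <= x.
  rewrite /x ler_pdivlMr // mul1r; lra.
have lnx0 : 0 <= ln x by apply: ln_ge0.
have hx0 : 0 <= hfun x by rewrite /hfun; lra.
have Hp : forall j, 0 < pbar R lab j /\ pbar R lab j <= 1 /\ 1 <= x * pbar R lab j.
  move=> j.
  have nmin : (n_min lab <= #|cluster lab j|)%N.
    by rewrite /n_min; apply: bigmin_le_seq; rewrite mem_index_enum.
  have nj : (#|cluster lab j| <= n)%N.
    by rewrite -[X in (_ <= X)%N](card_ord n) max_card.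
  have nminR : (n_min lab)%:R <= #|cluster lab j|%:R :> R by rewrite ler_nat.
  have njR : #|cluster lab j|%:R <= n%:R :> R by rewrite ler_nat.
  rewrite /pbar; split; last split.
  - by rewrite divr_gt0 // ltr0n hpos.
  - by rewrite ler_pdivrMr // mul1r.
  - rewrite /x mulrAC ler_pdivlMr // mul1r.
    apply: (le_trans hc).
    rewrite !mulrA ler_wpM2r ?invr_ge0 ?ler0n //.
    by rewrite ler_wpM2l // mulr_ge0 ?ler0n.
have Hq : forall j, 0 <= phat R g j /\ phat R g j <= 1.
  move=> j; rewrite /phat; split.
    by rewrite divr_ge0 // sumr_ge0.
  rewrite ler_pdivrMr // mul1r.
  have -> : n%:R = \sum_(i < n) (1 : R) by rewrite sumr_const card_ord.
  by apply: ler_sum => i _; case: (g i j).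
have Hd : forall j, `|phat R g j - pbar R lab j| <=
    (\sum_(i < n) (g i j != gTrue lab i j))%:R / n%:R.
  move=> j; rewrite /phat /pbar card_cluster -mulrBl normrM [`|n%:R^-1|]ger0_norm ?invr_ge0 ?ler0n //.
  rewrite ler_wpM2r ?invr_ge0 ?ler0n // !natr_sum -sumrB.
  apply: (le_trans (ler_norm_sum _ _ _)); apply: ler_sum => i _.
  by rewrite /gTrue; case: (g i j); case: (lab i == j); rewrite ?normr0 ?normr1 ?subr0 ?sub0r ?normrN ?normr1 ?subrr ?normr0.
have -> : `|(M_error lab g)%:R / n%:R| = \sum_(j < K) (\sum_(i < n) (g i j != gTrue lab i j))%:R / n%:R :> R.
  rewrite ger0_norm ?divr_ge0 // /M_error natr_sum mulr_suml //.
rewrite /entropy opprK addrC -sumrB.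
apply: (le_trans (ler_norm_sum _ _ _)).
rewrite mulr_sumr; apply: ler_sum => j _.
rewrite !xlogxE distrC.
have [p0 [p1 xp]] := Hp j.
have [q0 q1] := Hq j.
apply: (le_trans (@term_bound _ _ _ _ p0 p1 q0 q1 x1 xp)).
by rewrite /hfun ler_wpM2l // Hd.
Qed.
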